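(* If $MA_{\aleph_1}$ holds, then the space $\sigma(2^{\omega_1})=\{x\in 2^{\omega_1}:|x^{-1}(1)|<\omega\}$, as a subspace of the Cantor cube $2^{\omega_1}$, is discretely discretely generated.
   Context: A space $X$ is discretely discretely generated (DDG) if for every set $A\subseteq X$ and every discrete set $D\subseteq\overline{A}$ there is a discrete set $E\subseteq A$ with $D\subseteq\overline{E}$. $MA_{\aleph_1}$ is Martin's Axiom for ccc posets and $\aleph_1$ dense sets. *)

(* Defs.v *)
From HB Require Import structures.
From mathcomp Require Import all_boot all_order.
From mathcomp Require Import all_classical all_reals all_analysis.

Set Implicit Arguments.
Unset Strict Implicit.
Unset Printing Implicit Defensive.

Local Open Scope classical_set_scope.

Definition is_omega1 (W : Type) (lt : W -> W -> Prop) : Prop :=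
  [/\ well_founded lt,
      (forall x y z, lt x y -> lt y z -> lt x z),
      (forall x y, x = y \/ lt x y \/ lt y x),
      ~ countable [set: W]
    & (forall w : W, countable [set v | lt v w])].

Section Forcing.
Variables (P : Type) (le : P -> P -> Prop).

Definition is_partial_order : Prop :=
  [/\ (forall p, le p p),
      (forall p q r, le p q -> le q r -> le p r)
    & (forall p q, le p q -> le q p -> p = q)].

Definition compatible (p q : P) : Prop := exists r, le r p /\ le r q.

Definition antichain (A : set P) : Prop :=
  forall p q, A p -> A q -> p <> q -> ~ compatible p q.

Definition ccc : Prop := forall A : set P, antichain A -> countable A.

Definition dense_set (D : set P) : Prop := forall p, exists2 q, D q & le q p.

Definition is_filter (G : set P) : Prop :=
  [/\ G !=set0,
      (forall p q, G p -> le p q -> G q)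
    & (forall p q, G p -> G q -> exists r, [/\ G r, le r p & le r q])].
End Forcing.

Definition MA_aleph1 : Prop :=
  forall (W : Type) (lt : W -> W -> Prop), is_omega1 lt ->
  forall (P : Type) (le : P -> P -> Prop),
    is_partial_order le -> inhabited P -> ccc le ->
    forall D : W -> set P, (forall w, dense_set le (D w)) ->
    exists G : set P, is_filter le G /\ forall w, G `&` D w !=set0.

Definition cantor_cube (I : Type) : topologicalType :=
  prod_topology (fun _ : I => bool).

Definition sigma_product (I : Type) : set (cantor_cube I) :=
  [set x | finite_set [set i | x i = true]].

Section DDG.
Variable T : topologicalType.

(* D is discrete as a subspace of X (D is assumed to be a subset of X) *)
Definition discrete_in (X D : set T) : Prop :=
  forall x, D x -> exists U : set T, open U /\ U `&` X `&` D = [set x].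

Definition closure_in (X A : set T) : set T := closure A `&` X.

Definition DDG_subspace (X : set T) : Prop :=
  forall A : set T, A `<=` X ->
  forall D : set T, D `<=` closure_in X A -> discrete_in X D ->
  exists E : set T, [/\ E `<=` A, discrete_in X E & D `<=` closure_in X E].
End DDG.
Arguments sigma_product I : clear implicits.

(* Main.v *)
Require Import Defs.
From mathcomp Require Import all_boot all_classical all_reals all_analysis.
Set Implicit Arguments.
Unset Strict Implicit.
Unset Printing Implicit Defensive.
Local Open Scope classical_set_scope.

Lemma countable_inj_into T U (f : T -> U) (S : set T) (B : set U) :
  {in S &, injective f} -> (forall x, S x -> B (f x)) -> countable B -> countable S.
Proof.
move=> finj fSB /countable_injP [g ginj]; apply/countable_injP.
exists (g \o f) => x y Sx Sy /= /ginj.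
rewrite !inE in Sx Sy.
move=> h; apply: finj; rewrite ?inE //; apply: h; rewrite inE; exact: fSB.
Qed.

Lemma countable_sub T (S B : set T) : S `<=` B -> countable B -> countable S.
Proof. by move=> SB; apply: sub_countable; apply: subset_card_le. Qed.

Lemma countableU2 T (S1 S2 : set T) : countable S1 -> countable S2 ->
  countable (S1 `|` S2).
Proof.
move=> c1 c2.
apply: (@countable_sub _ _ (\bigcup_(b in [set: bool]) (if b then S1 else S2))).
  by move=> x [H|H]; [exists true|exists false].
by apply: bigcup_countable => // -[].
Qed.

Lemma pigeon_countable T (K : countType) (f : T -> K) (S : set T) :
  ~ countable S -> exists k, ~ countable (S `&` [set x | f x = k]).
Proof.
move=> Sunc; apply: contrapT => H; apply: Sunc.
apply: (@countable_sub _ _ (\bigcup_(k in [set: K]) (S `&` [set x | f x = k]))).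
  by move=> x Sx; exists (f x).
apply: bigcup_countable => // k _; apply: contrapT => Hk; apply: H; by exists k.
Qed.

Lemma countable_enum T (x0 : T) (S : set T) : countable S ->
  exists e : nat -> T, forall x, S x -> exists n, e n = x.
Proof.
move=> /countable_injP [f finj].
pose e n := if pselect (exists x, S x /\ f x = n) is left h then projT1 (cid h) else x0.
exists e => x Sx; exists (f x); rewrite /e.
case: pselect => [h|]; last by move=> nh; exfalso; apply: nh; exists x.
case: (cid h) => y [Sy fy] /=; apply: finj; rewrite ?inE //.
Qed.

Section AL.
Variable T : eqType.
Variable a0 : T.
Definition aligned (s s' : seq T) :=
  forall a, a \in s -> a \in s' -> index a s = index a s'.

Lemma AL_caseB n (S : set (seq T)) (fr : seq nat) :
  (forall s, S s -> uniq s /\ size s = n) -> ~ countable S ->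
  (forall s s', S s -> S s' -> forall i, (i < n)%N -> i \notin fr -> nth a0 s i = nth a0 s' i) ->
  (forall i a, (i < n)%N -> i \in fr -> countable (S `&` [set s | nth a0 s i = a])) ->
  exists s s', [/\ S s, S s', s <> s' & aligned s s'].
Proof.
move=> HS Sunc hfix hB.
have [s0 Ss0] : exists s0, S s0.
  apply: contrapT => h; apply: Sunc.
  suff -> : S = set0 by [].
  by apply/seteqP; split => s // Ss; apply: h; exists s.
pose F (ik : nat * nat) := if ((ik.1 < n)%N && (ik.1 \in fr)) then
   S `&` [set s | nth a0 s ik.1 = nth a0 s0 ik.2] else set0.
have cBad : countable (\bigcup_(ik in [set: nat * nat]) F ik).
  apply: bigcup_countable => // -[i k] _; rewrite /F /=.
  by case: ifP => // /andP [h1 h2]; apply: hB.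
have [s' [Ss' nBad ns0]] : exists s', [/\ S s', ~ (\bigcup_(ik in [set: nat * nat]) F ik) s' & s' <> s0].
  apply: contrapT => h; apply: Sunc.
  apply: (@countable_sub _ _ ((\bigcup_(ik in [set: nat * nat]) F ik) `|` [set s0])).
    move=> s Ss; apply: contrapT => hs; apply: h; exists s; split => //.
      by move=> hb; apply: hs; left.
    by move=> e; apply: hs; right.
  by apply: countableU2 => //; exact: countable1.
exists s0, s'; split => //; first by move=> e; apply: ns0.
move=> a a0s a0s'.
have [u0 n0] := HS s0 Ss0; have [u1 n1] := HS s' Ss'.
set j := index a s'.
have jlt : (j < n)%N by rewrite -n1 index_mem.
have nj : nth a0 s' j = a by rewrite nth_index.
case jfr : (j \in fr).
  exfalso; apply: nBad; exists (j, index a s0) => //.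
  by rewrite /F /= jlt jfr /=; split => //; rewrite nj nth_index.
have := hfix s0 s' Ss0 Ss' j jlt; rewrite jfr => /(_ isT); rewrite nj => <-.
by rewrite index_uniq // n0.
Qed.

Lemma AL_gen n m : forall (S : set (seq T)) (fr : seq nat),
  (forall s, S s -> uniq s /\ size s = n) -> ~ countable S -> uniq fr -> (size fr <= m)%N ->
  (forall s s', S s -> S s' -> forall i, (i < n)%N -> i \notin fr -> nth a0 s i = nth a0 s' i) ->
  exists s s', [/\ S s, S s', s <> s' & aligned s s'].
Proof.
elim: m => [|m IH] S fr HS Sunc ufr szfr hfix.
  apply: (AL_caseB HS Sunc hfix) => i a _ ifr.
  by move: szfr; rewrite leqn0 => /eqP /size0nil h; rewrite h in ifr.
have [[i [a [ilt ifr unc]]]|cB] := pselect (exists i a, [/\ (i < n)%N, i \in fr &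
     ~ countable (S `&` [set s | nth a0 s i = a])]).
  have sz : (size (rem i fr) <= m)%N.
    by rewrite size_rem //; move: szfr; case: (size fr).
  have fx : forall s s', (S `&` [set s | nth a0 s i = a]) s ->
      (S `&` [set s | nth a0 s i = a]) s' -> forall k, (k < n)%N -> k \notin rem i fr ->
      nth a0 s k = nth a0 s' k.
    move=> s s' [Ss si] [Ss' si'] k kn; rewrite mem_rem_uniq // negb_and negbK.
    case/orP => [/eqP ->|kfr]; first by rewrite si si'.
    exact: hfix.
  have [s [s' [[Ss _] [Ss' _] ne al]]] := IH (S `&` [set s | nth a0 s i = a]) (rem i fr)
     (fun s Hs => HS s Hs.1) unc (rem_uniq _ ufr) sz fx.
  by exists s, s'.
apply: (AL_caseB HS Sunc hfix) => i a ilt ifr.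
by apply: contrapT => h; apply: cB; exists i, a; split.
Qed.

Lemma AL n (S : set (seq T)) :
  (forall s, S s -> uniq s /\ size s = n) -> ~ countable S ->
  exists s s', [/\ S s, S s', s <> s' & aligned s s'].
Proof.
move=> HS Sunc; apply: (@AL_gen n n S (iota 0 n) HS Sunc (iota_uniq _ _)).
  by rewrite size_iota.
by move=> s s' _ _ i ilt; rewrite mem_iota /= ilt.
Qed.
End AL.

Section Top.
Variable W : Type.
Local Notation C := (cantor_cube W).
Local Notation V := {classic W}.

Definition agree (F : seq V) (x y : C) := forall i, i \in F -> y i = x i.

Lemma agree_seq (x : C) (s : seq (set C)) :
  (forall M, M \in s -> exists i (A : set bool), M = (fun f : C => f i) @^-1` A) ->
  exists F, forall y : C, agree F x y -> forall M, M \in s -> M x -> M y.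
Proof.
elim: s => [|M s IH] H.
  by exists nil => y _ M; rewrite in_nil.
have [F HF] : exists F, forall y : C, agree F x y -> forall M, M \in s -> M x -> M y.
  by apply: IH => M' HM'; apply: H; rewrite in_cons HM' orbT.
have [i [A ->]] := H M (mem_head _ _).
exists ((i : V) :: F) => y ag M'; rewrite in_cons => /orP [/eqP ->|Ms].
  by rewrite /preimage /= (ag i (mem_head _ _)).
by apply: HF => // j Hj; apply: ag; rewrite in_cons Hj orbT.
Qed.

Lemma nbhs_basic (x : C) (U : set C) : nbhs x U ->
  exists F : seq V, forall y : C, agree F x y -> U y.
Proof.
move=> [P [[Q QfinP <-] [V JV Vpz]] PU].
have [L Lsub VL] := QfinP _ JV.
have [F HF] : exists F, forall y : C, agree F x y ->
    forall M, M \in finmap.enum_fset L -> M x -> M y.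
  apply: agree_seq => M /Lsub; rewrite inE => -[i _ [A _ <-]]; by exists i, A.
exists F => y ag; apply: PU; exists V => //.
move: Vpz; rewrite /= -VL => Vx M LM; exact: HF ag M LM (Vx M LM).
Qed.

Lemma open_basic (x : C) (F : seq V) : open [set y : C | agree F x y].
Proof.
elim: F => [|i F IH].
  suff -> : [set y : C | agree nil x y] = setT by exact: openT.
  by apply/seteqP; split => y //= _ j; rewrite in_nil.
have -> : [set y : C | agree (i :: F) x y] =
   [set y : C | y i = x i] `&` [set y : C | agree F x y].
  apply/seteqP; split => y /=.
    move=> ag; split; first by apply: ag; exact: mem_head.
    by move=> j Hj; apply: ag; rewrite in_cons Hj orbT.
  move=> [H1 H2] j; rewrite in_cons => /orP [/eqP ->|Hj] //; exact: H2.
apply: openI => //.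
set M := [set y : C | y i = x i].
exists [set M]; last by rewrite bigcup_set1.
move=> _ ->.
exists (finmap.fset1 M).
  move=> N; rewrite finmap.in_fset1 => /eqP ->; rewrite inE.
  exists i => //; exists [set x i] => //.
  exact: discrete_open.
apply/seteqP; split => y /=.
  by move=> /(_ M); apply; rewrite /= finmap.in_fset1.
by move=> My N; rewrite /= finmap.in_fset1 => /eqP ->.
Qed.

Lemma nbhs_basic' (x : C) (F : seq V) : nbhs x [set y : C | agree F x y].
Proof. by apply: open_nbhs_nbhs; split; [exact: open_basic|]. Qed.

Definition sub (a b : C) := forall i, a i -> b i.

Lemma supp_ex (d : C) : sigma_product W d -> exists L : seq V, forall i : V, d i = (i \in L).
Proof.
move=> /(@finite_seqP V) [L /seteqP [h1 h2]]; exists L => i.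
apply/idP/idP => [di|iL]; first exact: (h1 i).
exact: (h2 i).
Qed.

Definition sl (d : C) : seq V :=
  if pselect (sigma_product W d) is left h then projT1 (cid (supp_ex h)) else [::].

Lemma slP (d : C) : sigma_product W d -> forall i : V, d i = (i \in sl d).
Proof.
move=> h; rewrite /sl; case: pselect => // h'; by case: cid.
Qed.

Lemma agree_nil (x y : C) : agree [::] x y.
Proof. by move=> i; rewrite in_nil. Qed.

Lemma agree_cat F1 F2 (x y : C) : agree (F1 ++ F2) x y <-> agree F1 x y /\ agree F2 x y.
Proof.
split => [h|[h1 h2] i]; last by rewrite mem_cat => /orP [/h1|/h2].
by split => i Hi; apply: h; rewrite mem_cat Hi ?orbT.
Qed.
End Top.

Unset Implicit Arguments.
Unset Strict Implicit.
Unset Printing Implicit Defensive.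
Local Open Scope classical_set_scope.

From mathcomp Require finmap.
Section Main.
Import finmap.
Variables (W : Type).
Local Notation C := (cantor_cube W).
Local Notation V := {classic W}.
Local Notation X := (sigma_product W).
Variables (A D : set C).
Hypothesis AX : A `<=` X.
Hypothesis DA : D `<=` closure_in X A.
Hypothesis Ddisc : discrete_in X D.

Lemma DX : D `<=` X.
Proof. by move=> d /DA []. Qed.

Definition iso (d : C) := A d /\ exists U : set C, [/\ open U, U d & forall a, A a -> U a -> a = d].

Definition Fd (d : C) : seq V :=
  if pselect (exists F : seq V, forall y, agree F d y -> X y -> D y -> y = d) is left h
  then projT1 (cid h) else [::].

Lemma FdP d : D d -> forall y, agree (Fd d) d y -> X y -> D y -> y = d.
Proof.
move=> Dd; rewrite /Fd; case: pselect => [h|nh]; first by case: (cid h).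
exfalso; apply: nh.
have [U [oU UE]] := Ddisc d Dd.
have Ud : U d by have : ([set d] : set C) d by []; rewrite -UE => -[[]].
have [F HF] := nbhs_basic (open_nbhs_nbhs (conj oU Ud)).
exists F => y ag Xy Dy.
have : (U `&` X `&` D) y by split; [split; [exact: HF|]|].
by rewrite UE.
Qed.

Lemma approx d : D d -> ~ iso d -> forall F : seq V,
  exists a, [/\ A a, a <> d & agree F d a].
Proof.
move=> Dd ni F; apply: contrapT => h.
have hU : forall a, A a -> agree F d a -> a = d.
  move=> a Aa ag; apply: contrapT => ne; apply: h; by exists a.
have [cd Xd] : closure_in X A d := DA d Dd.
have Ad : A d.
  have [a [Aa ag]] := cd _ (nbhs_basic' d F).
  by rewrite -(hU a Aa ag).
apply: ni; split => //; exists [set y | agree F d y]; split => //.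
exact: open_basic.
Qed.

Definition pick (d : C) (F : seq V) : C :=
  if pselect (exists a, [/\ A a, a <> d & agree F d a]) is left h
  then projT1 (cid h) else d.

Lemma pickP d F : D d -> ~ iso d -> [/\ A (pick d F), pick d F <> d & agree F d (pick d F)].
Proof.
move=> Dd ni; rewrite /pick; case: pselect => [h|nh]; first by case: (cid h).
by exfalso; apply: nh; apply: approx.
Qed.

Fixpoint Gs (d : C) (k : nat) : seq V :=
  match k with
  | 0 => Fd d ++ sl d
  | k'.+1 => Gs d k' ++ sl (pick d (Gs d k'))
  end.

Definition t (d : C) (k : nat) : C :=
  if pselect (iso d) then d else pick d (Gs d k).

Lemma Gs_mono d j k : (j <= k)%N -> forall i, i \in Gs d j -> i \in Gs d k.
Proof.
move=> /subnK <-; elim: (k - j)%N => [|m IH] i Hi //.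
by rewrite addSn /= mem_cat IH.
Qed.

Section NonIso.
Variable d : C.
Hypothesis Dd : D d.
Hypothesis ni : ~ iso d.

Lemma tE k : t d k = pick d (Gs d k).
Proof. by rewrite /t; case: pselect. Qed.

Lemma tA k : A (t d k).
Proof. by rewrite tE; case: (pickP d (Gs d k) Dd ni). Qed.

Lemma tne k : t d k <> d.
Proof. by rewrite tE; case: (pickP d (Gs d k) Dd ni). Qed.

Lemma tG k : agree (Gs d k) d (t d k).
Proof. by rewrite tE; case: (pickP d (Gs d k) Dd ni). Qed.

Lemma tFd k : agree (Fd d) d (t d k).
Proof.
move=> i Hi; apply: tG; apply: (@Gs_mono d 0) => //.
by rewrite /= mem_cat Hi.
Qed.

Lemma tsub k : sub d (t d k).
Proof.
move=> i di; rewrite (tG k) //; apply: (@Gs_mono d 0) => //.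
by rewrite /= mem_cat -slP ?di ?orbT //; exact: DX.
Qed.

Lemma ttail k : exists i, t d k i /\ ~~ d i.
Proof.
apply: contrapT => h; apply: (tne k).
apply: functional_extensionality_dep => i.
apply/idP/idP => [ti|]; last exact: tsub.
by apply: contrapT => ndi; apply: h; exists i; split => //; apply/negP.
Qed.

Lemma tdisj j k i : (j < k)%N -> t d j i -> ~~ d i -> t d k i = false.
Proof.
move=> jk tji ndi; rewrite (tG k); first by apply/negbTE.
apply: (@Gs_mono d j.+1) => //.
rewrite /= mem_cat -tE -slP ?tji ?orbT //; exact: (AX _ (tA j)).

Qed.
End NonIso.

Lemma tisoE d k : iso d -> t d k = d.
Proof. by rewrite /t; case: pselect. Qed.

Lemma tsub_all d k : D d -> sub d (t d k).
Proof.
move=> Dd; have [h|h] := pselect (iso d); first by rewrite tisoE.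
exact: tsub.
Qed.

Lemma tA_all d k : D d -> A (t d k).
Proof.
move=> Dd; have [h|h] := pselect (iso d); first by rewrite tisoE //; case: h.
exact: tA.
Qed.

Lemma teventually d (F : seq V) : D d -> exists N, forall k, (N <= k)%N -> agree F d (t d k).
Proof.
move=> Dd; have [h|ni] := pselect (iso d).
  by exists 0%N => k _ i _; rewrite tisoE.
elim: F => [|i F [N1 HN1]]; first by exists 0%N => k _ j; rewrite in_nil.
have [Ni HNi] : exists Ni, forall k, (Ni <= k)%N -> t d k i = d i.
  have [[k0 [tk0 nd]]|nex] := pselect (exists k0, t d k0 i /\ ~~ d i).
    exists k0.+1 => k k0k; rewrite (tdisj d Dd ni k0 k i k0k tk0 nd).
    by apply/esym/negbTE.
  exists 0%N => k _; apply/idP/idP => [tki|]; last exact: tsub.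
  by apply: contrapT => ndi; apply: nex; exists k; split => //; apply/negP.
exists (maxn N1 Ni) => k; rewrite geq_max => /andP [h1 h2] j.
rewrite in_cons => /orP [/eqP ->|jF]; first exact: HNi.
exact: HN1.
Qed.


Definition Idx := (C * nat)%type.
Definition tp (x : Idx) : C := t x.1 x.2.
Definition strict (a b : C) := sub a b /\ a <> b.
Definition valid (p : set Idx) :=
  forall x y, p x -> p y -> strict (tp x) (tp y) -> sub (tp x) y.1 \/ iso x.1.
Definition condP (p : set Idx) := [/\ finite_set p, (forall x, p x -> D x.1) & valid p].
Definition Cond := {p : set Idx | condP p}.
Definition cle (q p : Cond) := sval p `<=` sval q.

Lemma Cond_eq (p q : Cond) : sval p = sval q -> p = q.
Proof. by case: p q => p hp [q hq] /= e; apply: eq_exist. Qed.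

Lemma cle_po : is_partial_order cle.
Proof.
split.
- by move=> p.
- by move=> p q r pq qr x /qr /pq.
- move=> p q pq qp; apply: Cond_eq; apply/seteqP; split; [exact: qp|exact: pq].
Qed.

Lemma cond0 : condP set0.
Proof. by split => // x y. Qed.

Lemma Cond_inhabited : inhabited Cond.
Proof. exact: (inhabits (exist _ set0 cond0)). Qed.

Lemma tpX (x : Idx) : D x.1 -> X (tp x).
Proof. by move=> Dx; apply: AX; apply: tA_all. Qed.

Lemma plist_ex (p : Cond) : exists s : seq {classic Idx}, forall x, sval p x <-> x \in s.
Proof.
have fp : finite_set (sval p) by case: (svalP p).
have /(@finite_seqP {classic Idx}) [s /seteqP [h1 h2]] := fp.
exists s => x; split => [/h1 //|xs]; exact: h2.
Qed.

Definition plist (p : Cond) : seq {classic Idx} := projT1 (cid (plist_ex p)).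
Lemma plistP p x : sval p x <-> x \in plist p.
Proof. rewrite /plist; case: cid => s h /=; exact: h. Qed.

Definition Lp (p : Cond) : seq V :=
  undup (flatten [seq sl (tp x) ++ sl x.1 | x <- plist p]).

Lemma Lp_uniq p : uniq (Lp p).
Proof. exact: undup_uniq. Qed.

Lemma condD (p : Cond) x : sval p x -> D x.1.
Proof. by case: (svalP p) => _ h _; apply: h. Qed.

Lemma condV (p : Cond) : valid (sval p).
Proof. by case: (svalP p). Qed.

Lemma LpP (p : Cond) x (i : V) : sval p x -> (tp x i \/ x.1 i) -> i \in Lp p.
Proof.
move=> px hi; rewrite /Lp mem_undup; apply/flattenP.
exists (sl (tp x) ++ sl x.1); first by apply/(@mapP {classic Idx}); exists x => //; exact: ((plistP p x).1 px).
rewrite mem_cat; case: hi => hi.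
  by rewrite -slP ?hi //; apply: tpX; apply: (condD p).
by rewrite -(@slP _ x.1) ?hi ?orbT //; apply: DX; apply: (condD p).
Qed.


Definition trip (L : seq V) (x : Idx) : (seq bool * seq bool * bool * nat)%type :=
  (map (tp x) L, map x.1 L, `[< iso x.1 >], x.2).

Definition ty (p : Cond) : (nat * {fset (seq bool * seq bool * bool * nat)})%type :=
  (size (Lp p), fset_set [set trip (Lp p) x | x in sval p]).

Lemma condF (p : Cond) : finite_set (sval p).
Proof. by case: (svalP p). Qed.

Lemma ty_mem p q : ty p = ty q -> forall x', sval q x' ->
  exists2 y, sval p y & trip (Lp p) y = trip (Lp q) x'.
Proof.
move=> [_ E] x' qx'.
have fq : finite_set [set trip (Lp q) x | x in sval q].
  by apply: finite_image; exact: condF.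
have fp : finite_set [set trip (Lp p) x | x in sval p].
  by apply: finite_image; exact: condF.
have PQ : [set trip (Lp p) x | x in sval p] = [set trip (Lp q) x | x in sval q].
  by rewrite -(fset_setK fp) -(fset_setK fq) E.
have : [set trip (Lp q) x | x in sval q] (trip (Lp q) x') by exists x'.
rewrite -PQ => -[y py ey].
by exists y.
Qed.

Lemma val_eq (L L' : seq V) (y x' : Idx) (a : V) : aligned L L' -> a \in L -> a \in L' ->
  trip L y = trip L' x' -> tp y a = tp x' a /\ y.1 a = x'.1 a.
Proof.
move=> al aL aL' [E1 E2 _ _].
have il : (index a L < size L)%N by rewrite index_mem.
have il' : (index a L < size L')%N by rewrite (al a aL aL') index_mem.
split.
  have := congr1 (fun s => nth false s (index a L)) E1.
  rewrite /= (nth_map a) // (nth_map a) // nth_index // (al a aL aL') nth_index //.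
have := congr1 (fun s => nth false s (index a L)) E2.
rewrite /= (nth_map a) // (nth_map a) // nth_index // (al a aL aL') nth_index //.
Qed.

Lemma core (p q : Cond) : aligned (Lp p) (Lp q) -> size (Lp p) = size (Lp q) ->
  (forall x', sval q x' -> exists2 y, sval p y & trip (Lp p) y = trip (Lp q) x') ->
  forall x x', sval p x -> sval q x' -> strict (tp x) (tp x') -> sub (tp x) x'.1 \/ iso x.1.
Proof.
move=> al sz tyq x x' px qx' [sxx' nxx'].
have [y py ey] := tyq x' qx'.
have memL : forall a, tp x a -> a \in Lp p := fun a h => LpP p x a px (or_introl h).
have memL' : forall a, tp x a -> a \in Lp q :=
  fun a h => LpP q x' a qx' (or_introl (sxx' a h)).
have vals : forall a, tp x a -> tp y a = tp x' a /\ y.1 a = x'.1 a.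
  by move=> a h; apply: (val_eq (Lp p) (Lp q)) => //; [exact: memL|exact: memL'].
have sxy : sub (tp x) (tp y) by move=> a h; rewrite (vals a h).1; apply: sxx'.
have nxy : tp x <> tp y.
  move=> exy.
  have [b [tb nb]] : exists b : V, tp x' b /\ ~~ tp x b.
    apply: contrapT => h; apply: nxx'; apply: functional_extensionality_dep => b.
    apply/idP/idP => [|tb]; first exact: sxx'.
    by apply: contrapT => nb; apply: h; exists b; split => //; apply/negP.
  have bL' : b \in Lp q := LpP q x' b qx' (or_introl tb).
  pose j := index b (Lp q).
  have jlt : (j < size (Lp p))%N by rewrite sz index_mem.
  pose u := nth b (Lp p) j.
  have tyu : tp y u = tp x' b.
    case: ey => E1 _ _ _.
    have := congr1 (fun s => nth false s j) E1.
    by rewrite /= (nth_map b) // (nth_map b) ?nth_index // -sz.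
  have txu : tp x u by rewrite exy tyu.
  have ujp : index u (Lp p) = j by rewrite index_uniq // Lp_uniq.
  have := al u (memL u txu) (memL' u txu); rewrite ujp => ujq.
  have : nth b (Lp q) (index u (Lp q)) = u by rewrite nth_index // memL'.
  rewrite -ujq nth_index // => bu.
  by move: nb; rewrite bu txu.
have [syy|] := condV p x y px py (conj sxy nxy); last by right.
by left => a h; have := syy a h; rewrite (vals a h).2.
Qed.

Lemma aligned_sym (L L' : seq V) : aligned L L' -> aligned L' L.
Proof. by move=> al a h1 h2; rewrite al. Qed.

Lemma compat (p q : Cond) : aligned (Lp p) (Lp q) -> ty p = ty q ->
  condP (sval p `|` sval q).
Proof.
move=> al et; have sz : size (Lp p) = size (Lp q) by case: et.
split.
- by rewrite finite_setU; split; apply: condF.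
- by move=> x [px|qx]; [apply: (condD p)|apply: (condD q)].
- move=> x y [px|qx] [py|qy].
  + exact: (condV p x y px py).
  + exact: (core p q al sz (ty_mem p q et)).
  + exact: (core q p (aligned_sym _ _ al) (esym sz) (ty_mem q p (esym et))).
  + exact: (condV q x y qx qy).
Qed.

Lemma map_eq_supp (L : seq V) (f g : C) : map f L = map g L ->
  (forall i, f i -> i \in L) -> (forall i, g i -> i \in L) -> f = g.
Proof.
move=> E hf hg; apply: functional_extensionality_dep => i0.
pose i : V := i0.
case iL: (i \in L).
  have := congr1 (fun s => nth false s (index i L)) E.
  by rewrite /= !(nth_map i) ?index_mem // nth_index.
case fi: (f i0); first by have := hf i0 fi; rewrite -/i iL.
case gi: (g i0) => //; by have := hg i0 gi; rewrite -/i iL.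
Qed.

Lemma ty_inj (p q : Cond) : ty p = ty q -> Lp p = Lp q -> p = q.
Proof.
have side : forall p q : Cond, ty p = ty q -> Lp p = Lp q -> sval q `<=` sval p.
  move=> {}p {}q et eL x qx.
  have [y py ey] := ty_mem p q et x qx.
  suff -> : x = y by [].
  move: ey; rewrite eL => -[_ E2 _ E4].
  have e1 : y.1 = x.1.
    apply: (map_eq_supp (Lp q)) => // i h.
      by rewrite -eL; apply: (LpP p y i py); right.
    by apply: (LpP q x i qx); right.
  by case: x y e1 E4 {qx py E2} => [x1 x2] [y1 y2] /= -> ->.
move=> et eL; apply: Cond_eq; apply/seteqP; split.
  exact: side (esym et) (esym eL).
exact: side.
Qed.

Variable w0 : W.

Lemma Cond_ccc : ccc cle.
Proof.
move=> S antiS; apply: contrapT => Sunc.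
have [tau Htau] := pigeon_countable ty Sunc.
set St := S `&` [set p | ty p = tau].
have Lunc : ~ countable (Lp @` St).
  move=> cL; apply: Htau.
  apply: (@countable_inj_into _ _ Lp St (Lp @` St)).
  - move=> p q /set_mem [_ tp'] /set_mem [_ tq] eL.
    by apply: ty_inj => //; rewrite tp' tq.
  - by move=> p Sp; exists p.
  - exact: cL.
have HS : forall s, (Lp @` St) s -> uniq s /\ size s = tau.1.
  by move=> _ [p [_ ep] <-]; split; [exact: Lp_uniq|rewrite -ep].
have [s [s' [[p [Sp ep] <-] [q [Sq eqq] <-] ne al]]] := @AL V w0 tau.1 (Lp @` St) HS Lunc.
have pq : p <> q by move=> e; apply: ne; rewrite e.
apply: (antiS p q Sp Sq pq).
have cP := compat p q al (etrans ep (esym eqq)).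
by exists (exist _ _ cP); split => x hx; [left|right].
Qed.


Definition req (d : C) (n : nat) : set Cond :=
  if pselect (D d) then [set p | exists k, (n <= k)%N /\ sval p (d, k)] else setT.

Lemma req_dense d n : dense_set cle (req d n).
Proof.
rewrite /req; case: pselect => Dd; last by move=> p; exists p.
move=> p.
have [N HN] := teventually d (Lp p) Dd.
pose k := maxn n N.
have ag : agree (Lp p) d (t d k) := HN k (leq_maxr n N).
pose p' := sval p `|` [set (d, k)].
have cp' : condP p'.
  split.
  - by rewrite finite_setU; split; [exact: condF|exact: finite_set1].
  - by move=> x [px|->]; [exact: (condD p)|].
  - move=> x y [px|->] [py|->].
    + exact: (condV p x y px py).
    + move=> [sxy _]; left => a h.
      have aL := LpP p x a px (or_introl h).
      by rewrite /= -(ag a aL); apply: sxy.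
    + move=> [sxy _]; have [h|ni] := pselect (iso d); first by right.
      have [b [tb nb]] := ttail d Dd ni k.
      have bL := LpP p y b py (or_introl (sxy b tb)).
      by move: nb; rewrite -(ag b bL) tb.
    + by move=> [_ ne].
exists (exist _ p' cp').
  by exists k; split; [exact: leq_maxl|right].
by move=> x px; left.
Qed.

Section Final.
Variable G : set Cond.
Hypothesis Gf : is_filter cle G.
Hypothesis Gmeet : forall d n, D d -> G `&` req d n !=set0.

Lemma Gvalid p q x y : G p -> G q -> sval p x -> sval q y ->
  strict (tp x) (tp y) -> sub (tp x) y.1 \/ iso x.1.
Proof.
move=> Gp Gq px qy; case: Gf => _ _ Gdir.
have [r [Gr rp rq]] := Gdir p q Gp Gq.
exact: (condV r x y (rp x px) (rq y qy)).
Qed.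

Definition E : set C := [set e | exists p x, [/\ G p, sval p x & e = tp x]].

Lemma E_A : E `<=` A.
Proof. by move=> _ [p [x [Gp px ->]]]; apply: tA_all; exact: (condD p x px). Qed.

Lemma E_disc : discrete_in X E.
Proof.
move=> _ [p [x [Gp px ->]]].
have Dd : D x.1 := condD p x px.
have [h|ni] := pselect (iso x.1).
  have eq1 : tp x = x.1 by rewrite /tp tisoE.
  case: (h) => Ad [U [oU Ud hU]].
  exists U; split => //; apply/seteqP; split => y.
    by move=> [[Uy _] Ey]; rewrite eq1; apply: hU => //; exact: E_A.
  move=> ->; split; [split|].
  - by rewrite eq1.
  - by apply: AX; apply: E_A; exists p, x.
  - by exists p, x.
pose d := x.1; pose k := x.2.
have ed : tp x = t d k by [].
exists [set y | agree (sl (tp x) ++ Fd d) (tp x) y]; split; first exact: open_basic.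
apply/seteqP; split => y; last first.
  move=> ->; split; [split|].
  - by move=> i.
  - by apply: AX; apply: E_A; exists p, x.
  - by exists p, x.
move=> [[/agree_cat [ag1 ag2] Xy] [q [y' [Gq qy' ey]]]].
apply: contrapT => ne.
have Xe : X (tp x) by apply: AX; apply: E_A; exists p, x.
have sey : sub (tp x) y.
  by move=> a ea; rewrite (ag1 a) // -slP.
have st : strict (tp x) (tp y').
  by split; [rewrite -ey|move=> e; apply: ne; rewrite ey e].
have [sd|hi] := Gvalid p q x y' Gp Gq px qy' st; last by exfalso; apply: ni.
have Dd' : D y'.1 := condD q y' qy'.
have sd'y : sub y'.1 y by rewrite ey; apply: tsub_all.
have sdd' : sub d y'.1 by move=> a da; apply: sd; rewrite ed; apply: (tsub d Dd ni k).
have agd : agree (Fd d) d y'.1.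
  move=> i iF; case di: (d i); first by apply: sdd'.
  apply/negbTE/negP => hi.
  have := ag2 i iF; rewrite (sd'y i hi) ed (tFd d Dd ni k i iF) di.
  by [].
have dd : y'.1 = d := FdP d Dd y'.1 agd (DX _ Dd') Dd'.
apply: (tne d Dd ni k); apply: functional_extensionality_dep => i.
apply/idP/idP => [ti|]; last exact: (tsub d Dd ni k).
by rewrite -dd; apply: sd.
Qed.

Lemma E_closure : D `<=` closure_in X E.
Proof.
move=> d Dd; split; last exact: DX.
move=> B /nbhs_basic [F HF].
have [N HN] := teventually d F Dd.
have [p [Gp]] := Gmeet d N Dd.
rewrite /req; case: pselect => // _ [k [Nk pk]].
exists (t d k); split; first by exists p, (d, k).
exact: HF (HN k Nk).
Qed.
End Final.

End Main.

Unset Implicit Arguments.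
Local Open Scope classical_set_scope.
Section Index.
Variables (W : Type) (lt : W -> W -> Prop).
Hypothesis Hw : is_omega1 lt.
Local Notation C := (cantor_cube W).
Local Notation V := {classic W}.
Local Notation X := (sigma_product W).
Definition ltp (a b : W * (nat * nat)) :=
  lt a.1 b.1 \/ (a.1 = b.1 /\ (pickle a.2 < pickle b.2)%N).
Lemma l1 : well_founded ltp.
Proof.
case: Hw => wf tr tri unc seg.
have key : forall w, forall n m, (pickle m < n)%N -> Acc ltp (w, m).
  apply: (well_founded_ind wf).
  move=> w IH; elim=> [|n IHn] m hm; first by [].
  constructor => -[v m'] [hl|[ev hp]].
    by apply: (IH v hl (pickle m').+1).
  simpl in ev, hp.
  rewrite ev; apply: IHn; exact: (leq_trans hp hm).
move=> [w m]; exact: (key w (pickle m).+1 m (ltnSn _)).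
Qed.

Lemma ltp_omega1 : is_omega1 ltp.
Proof.
have wfp := l1.
case: Hw => wf tr tri unc seg; split => //.
- move=> [a1 a2] [b1 b2] [c1 c2]; rewrite /ltp /=.
  case=> [hab|[eab pab]] [hbc|[ebc pbc]].
  + by left; apply: tr hab hbc.
  + by left; rewrite -ebc.
  + by left; rewrite eab.
  + by right; split; [rewrite eab|apply: ltn_trans pab pbc].
-
  move=> [a1 a2] [b1 b2]; rewrite /ltp /=.
  case: (tri a1 b1) => [eab|[hab|hba]]; last first.
  + by right; right; left.
  + by right; left; left.
  case: (ltngtP (pickle a2) (pickle b2)) => [h|h|h].
  + by right; left; right.
  + by right; right; right.
  + by left; rewrite eab (pcan_inj pickleK_inv h).
-
  move=> cT; apply: unc.
  apply: (@countable_inj_into _ _ (fun w : W => (w, (0, 0)%N)) setT setT) => //.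
  by move=> x y _ _ [].
-
  move=> [w m].
  apply: (@countable_sub _ _ (([set v | lt v w] `|` [set w]) `*` setT)).
    move=> [v m'] [h|[ev _]]; split => //.
      by left.
    by right; exact: ev.
  apply: countableX => //; apply: countableU2 => //; exact: countable1.
Qed.
Definition Sw (w : W) : set C := [set d | X d /\ forall i, d i -> lt i w \/ i = w].

Lemma Sw_countable w : countable (Sw w).
Proof.
case: Hw => wf tr tri unc seg.
apply: (@countable_inj_into _ _ (fun d : C => [set i | d i]) (Sw w)
  [set B | B `<=` ([set v | lt v w] `|` [set w]) /\ finite_set B]).
- move=> d d' _ _ e; apply: functional_extensionality_dep => i.
  have hi := congr1 (fun S : set W => S i) e; simpl in hi.
  apply/idP/idP => h.
    by rewrite hi in h.
  by rewrite -hi in h.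
- by move=> d [Xd hd]; split => // i /hd.
- apply: countable_finite_subset; apply: countableU2 => //; exact: countable1.
Qed.

Lemma maxW (s : seq V) : s != [::] -> exists w : W, forall i, i \in s -> lt i w \/ i = w.
Proof.
case: Hw => wf tr tri unc seg.
elim: s => [|a s IH] // _.
case: s IH => [|b s] IH.
  by exists a => i; rewrite in_cons in_nil orbF => /eqP ->; right.
have [w hw] := IH isT.
case: (tri a w) => [eaw|[hlt|hgt]].
- exists w => i; rewrite in_cons => /orP [/eqP ->|]; first by right.
  exact: hw.
- exists w => i; rewrite in_cons => /orP [/eqP ->|]; first by left.
  exact: hw.
- exists a => i; rewrite in_cons => /orP [/eqP ->|/hw [h|->]]; first by right.
  + by left; apply: tr h hgt.
  + by left.
Qed.

Variable w0 : W.

Lemma in_some_Sw d : X d -> exists w, Sw w d.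
Proof.
move=> Xd; case e: (sl d) => [|a s].
  exists w0; split => // i di; exfalso.
  by move: di; rewrite (slP Xd i) e in_nil.
have [w hw] := maxW (a :: s) isT.
exists w; split => // i di; apply: hw; by rewrite -e -slP.
Qed.

Definition enum_w (w : W) : nat -> C :=
  projT1 (cid (countable_enum (fun _ : W => false) (Sw_countable w))).

Definition gidx (v : W * (nat * nat)) : C * nat := (enum_w v.1 v.2.1, v.2.2).

Lemma gidx_surj d n : X d -> exists v, gidx v = (d, n).
Proof.
move=> Xd; have [w Sd] := in_some_Sw d Xd.
have := projT2 (cid (countable_enum (fun _ : W => false) (Sw_countable w))) d Sd.
move=> [a ea]; exists (w, (a, n)); rewrite /gidx /enum_w /=; congr (_, _); exact: ea.
Qed.
End Index.

Lemma main_DDG (W : Type) (lt : W -> W -> Prop) :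
  is_omega1 lt -> MA_aleph1 -> DDG_subspace (sigma_product W).
Proof.
move=> Hw MA A AX D DA Ddisc.
have [w0 _] : exists w : W, True.
  case: Hw => _ _ _ unc _; apply: contrapT => h; apply: unc.
  suff -> : [set: W] = set0 by [].
  by apply/seteqP; split => w // _; apply: h; exists w.
have Hw' := ltp_omega1 W lt Hw.
have [G [Gf Gm]] := MA _ _ Hw' (Cond W A D) (cle W A D) (cle_po W A D)
  (Cond_inhabited W A D) (Cond_ccc W A D AX DA w0)
  (fun v => req W A D (gidx W lt Hw v).1 (gidx W lt Hw v).2)
  (fun v => req_dense W A D AX DA _ _).
exists (E W A D G); split.
- exact: E_A DA G.
- exact: E_disc W A D AX DA Ddisc G Gf.
- apply: (E_closure W A D AX DA G) => d n Dd.
  have [v ev] := gidx_surj W lt Hw w0 d n (DX W A D DA d Dd).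
  by have := Gm v; rewrite ev.
Qed.


Theorem theorem6p9 (W : Type) (lt : W -> W -> Prop) :
  is_omega1 lt -> MA_aleph1 -> DDG_subspace (sigma_product W).
Proof. exact: main_DDG. Qed.
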